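(* Assume the standing hypotheses (S) with $\lambda\ge0$, that $\nabla\phi^{\#}_{\rho_0}$ is $L$-Lipschitz on $\mathbb H$, and $\tau\le1/L$. Then for every $n\ge0$: (1) the energy is non-increasing: \[\phi^{\#}_{\rho_0}(X_{n+1}^\tau)+\frac\lambda2\|X_n^\tau-X_{n+1}^\tau\|^2_{\mathbb H}+\tau\Big(1-\frac{L\tau}2\Big)\|\nabla\phi^{\#}_{\rho_0}(X_{n+1}^\tau)\|^2_{\mathbb H}\le\phi^{\#}_{\rho_0}(X_n^\tau);\] (2) the gradient norm decays exponentially: \[\|\nabla\phi^{\#}_{\rho_0}(X_n^\tau)\|^2_{\mathbb H}\ge e^{2\lambda_{\tau,L}\tau}\|\nabla\phi^{\#}_{\rho_0}(X_{n+1}^\tau)\|^2_{\mathbb H},\qquad\lambda_{\tau,L}:=\frac{\log\big(1+\lambda\tau(2-L\tau)\big)}{2\tau}\ge0.\]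
   Context: Standing hypotheses (S): $\rho_0\in\mathcal P_2(\mathbb R^d)$; $\mathbb H=L^2(\mathbb R^d;\rho_0)$ is the Hilbert space of $\rho_0$-square-integrable maps $\mathbb R^d\to\mathbb R^d$ with $\langle\xi_1,\xi_2\rangle_{\mathbb H}=\int\langle\xi_1,\xi_2\rangle d\rho_0$; $\phi:\mathcal P_2(\mathbb R^d)\to\mathbb R$ has lift $\phi^{\#}_{\rho_0}(\xi):=\phi(\xi_{\#}\rho_0)$ which is Fréchet differentiable on $\mathbb H$ (gradient $\nabla\phi^{\#}_{\rho_0}$), $\lambda$-convex on $\mathbb H$ for some $\lambda\in\mathbb R$ (i.e. $\phi^{\#}_{\rho_0}((1-t)\xi_1+t\xi_2)\le(1-t)\phi^{\#}_{\rho_0}(\xi_1)+t\phi^{\#}_{\rho_0}(\xi_2)-\frac\lambda2t(1-t)\|\xi_1-\xi_2\|_{\mathbb H}^2$), and $\inf_{\mathbb H}\phi^{\#}_{\rho_0}>-\infty$; the time step $\tau>0$ satisfies $\lambda/2+1/\tau>0$; $X_0^\tau\in\mathbb H$. Lagrangian trapezoidal scheme: $X_{n+1}^\tau$ is the (unique) minimizer over $\xi\in\mathbb H$ of $\tfrac12\phi^{\#}_{\rho_0}(\xi)+\tfrac12\langle\nabla\phi^{\#}_{\rho_0}(X_n^\tau),\xi\rangle_{\mathbb H}+\tfrac1{2\tau}\|\xi-X_n^\tau\|^2_{\mathbb H}$; equivalently $X_{n+1}^\tau=X_n^\tau-\frac\tau2\big(\nabla\phi^{\#}_{\rho_0}(X_{n+1}^\tau)+\nabla\phi^{\#}_{\rho_0}(X_n^\tau)\big)$.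 *)

(* Defs.v *)
From HB Require Import structures.
From mathcomp Require Import all_boot all_order all_algebra.
From mathcomp Require Import all_classical all_reals all_analysis.
Set Implicit Arguments. Unset Strict Implicit. Unset Printing Implicit Defensive.
Import Order.TTheory GRing.Theory Num.Theory.
Local Open Scope ring_scope.

Record is_inner_product (R : realType) (V : lmodType R) (ip : V -> V -> R) : Prop := {
  ip_sym : forall x y, ip x y = ip y x;
  ip_linear : forall (a : R) x y z, ip (a *: x + y) z = a * ip x z + ip y z;
  ip_pos : forall x, 0 <= ip x x;
  ip_def : forall x, ip x x = 0 -> x = 0 }.

Definition hnorm (R : realType) (V : lmodType R) (ip : V -> V -> R) (x : V) : R :=
  Num.sqrt (ip x x).

Definition hcomplete (R : realType) (V : lmodType R) (ip : V -> V -> R) : Prop :=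
  forall u : nat -> V,
    (forall e : R, 0 < e -> exists N : nat, forall m n : nat, (N <= m)%N -> (N <= n)%N ->
        hnorm ip (u m - u n) < e) ->
    exists l : V, forall e : R, 0 < e -> exists N : nat, forall n : nat, (N <= n)%N ->
        hnorm ip (u n - l) < e.

Definition hilbert (R : realType) (V : lmodType R) (ip : V -> V -> R) : Prop :=
  is_inner_product ip /\ hcomplete ip.

Definition frechet_gradient (R : realType) (V : lmodType R) (ip : V -> V -> R)
  (f : V -> R) (G : V -> V) : Prop :=
  forall x : V, forall e : R, 0 < e -> exists d : R, 0 < d /\
    forall h : V, hnorm ip h < d ->
      `| f (x + h) - f x - ip (G x) h | <= e * hnorm ip h.

Definition lambda_convex (R : realType) (V : lmodType R) (ip : V -> V -> R)
  (lam : R) (f : V -> R) : Prop :=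
  forall (x1 x2 : V) (t : R), 0 <= t <= 1 ->
    f ((1 - t) *: x1 + t *: x2) <=
      (1 - t) * f x1 + t * f x2 - lam / 2 * t * (1 - t) * hnorm ip (x1 - x2) ^+ 2.

Definition bounded_below (R : realType) (V : Type) (f : V -> R) : Prop :=
  exists m : R, forall x, m <= f x.

Definition hlipschitz (R : realType) (V : lmodType R) (ip : V -> V -> R)
  (L : R) (G : V -> V) : Prop :=
  forall x y, hnorm ip (G x - G y) <= L * hnorm ip (x - y).

Definition trap_functional (R : realType) (V : lmodType R) (ip : V -> V -> R)
  (f : V -> R) (G : V -> V) (tau : R) (Xn xi : V) : R :=
  f xi / 2 + ip (G Xn) xi / 2 + (2 * tau)^-1 * hnorm ip (xi - Xn) ^+ 2.

Definition trapezoidal_scheme (R : realType) (V : lmodType R) (ip : V -> V -> R)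
  (f : V -> R) (G : V -> V) (tau : R) (X : nat -> V) : Prop :=
  forall n : nat, forall xi : V,
    trap_functional ip f G tau (X n) (X n.+1) <= trap_functional ip f G tau (X n) xi.

Definition lam_tauL (R : realType) (lam tau L : R) : R :=
  ln (1 + lam * tau * (2 - L * tau)) / (2 * tau).

(* Main.v *)
Require Import Defs.
From HB Require Import structures.
From mathcomp Require Import all_boot all_order all_algebra.
From mathcomp Require Import all_classical all_reals all_analysis.
From mathcomp Require Import ring lra.
Import Order.TTheory GRing.Theory Num.Theory.
Set Implicit Arguments. Unset Strict Implicit.
Local Open Scope ring_scope.

Lemma ip0l (R : realType) (V : lmodType R) (ip : V -> V -> R) :
  is_inner_product ip -> forall z, ip 0 z = 0.
Proof.
move=> Hip z; have := ip_linear Hip 1 0 0 z.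
rewrite scaler0 addr0 mul1r; lra.
Qed.

Lemma ipDl (R : realType) (V : lmodType R) (ip : V -> V -> R) :
  is_inner_product ip -> forall x y z, ip (x + y) z = ip x z + ip y z.
Proof. by move=> Hip x y z; have := ip_linear Hip 1 x y z; rewrite scale1r mul1r. Qed.

Lemma ipZl (R : realType) (V : lmodType R) (ip : V -> V -> R) :
  is_inner_product ip -> forall a x z, ip (a *: x) z = a * ip x z.
Proof.
by move=> Hip a x z; have := ip_linear Hip a x 0 z; rewrite addr0 ip0l // addr0.
Qed.

Lemma ipNl (R : realType) (V : lmodType R) (ip : V -> V -> R) :
  is_inner_product ip -> forall x z, ip (- x) z = - ip x z.
Proof. by move=> Hip x z; rewrite -scaleN1r ipZl // mulN1r. Qed.

Lemma ipBl (R : realType) (V : lmodType R) (ip : V -> V -> R) :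
  is_inner_product ip -> forall x y z, ip (x - y) z = ip x z - ip y z.
Proof. by move=> Hip x y z; rewrite ipDl // ipNl. Qed.

Lemma ipDr (R : realType) (V : lmodType R) (ip : V -> V -> R) :
  is_inner_product ip -> forall x y z, ip z (x + y) = ip z x + ip z y.
Proof. by move=> Hip x y z; rewrite !(ip_sym Hip z) ipDl. Qed.

Lemma ipZr (R : realType) (V : lmodType R) (ip : V -> V -> R) :
  is_inner_product ip -> forall a x z, ip z (a *: x) = a * ip z x.
Proof. by move=> Hip a x z; rewrite !(ip_sym Hip z) ipZl. Qed.

Lemma ipNr (R : realType) (V : lmodType R) (ip : V -> V -> R) :
  is_inner_product ip -> forall x z, ip z (- x) = - ip z x.
Proof. by move=> Hip x z; rewrite !(ip_sym Hip z) ipNl. Qed.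

Lemma ipBr (R : realType) (V : lmodType R) (ip : V -> V -> R) :
  is_inner_product ip -> forall x y z, ip z (x - y) = ip z x - ip z y.
Proof. by move=> Hip x y z; rewrite ipDr // ipNr. Qed.

Lemma hnorm_sq (R : realType) (V : lmodType R) (ip : V -> V -> R) :
  is_inner_product ip -> forall x, hnorm ip x ^+ 2 = ip x x.
Proof. by move=> Hip x; rewrite /hnorm sqr_sqrtr // ip_pos. Qed.

Lemma hnorm_ge0 (R : realType) (V : lmodType R) (ip : V -> V -> R) x :
  0 <= hnorm ip x.
Proof. exact: sqrtr_ge0. Qed.

Lemma hnormZ (R : realType) (V : lmodType R) (ip : V -> V -> R) :
  is_inner_product ip -> forall a x, hnorm ip (a *: x) = `|a| * hnorm ip x.
Proof.
move=> Hip a x; rewrite /hnorm ipZl // ipZr // mulrA -expr2 sqrtrM ?sqr_ge0 //.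
by rewrite sqrtr_sqr.
Qed.

Lemma frechet_dir (R : realType) (V : lmodType R) (ip : V -> V -> R)
  (f : V -> R) (G : V -> V) :
  is_inner_product ip -> frechet_gradient ip f G ->
  forall x v e, 0 < e -> exists t0, 0 < t0 /\ forall t, 0 < t -> t < t0 ->
   `| f (x + t *: v) - f x - t * ip (G x) v | <= e * t * hnorm ip v.
Proof.
move=> Hip Hf x v e he; have [d [hd Hd]] := Hf x e he.
have hN := @hnorm_ge0 R V ip v.
exists (d / (hnorm ip v + 1)); split; first by apply: divr_gt0 => //; lra.
move=> t ht htd.
have := Hd (t *: v); rewrite hnormZ // ipZr // gtr0_norm // -mulrA; apply.
rewrite ltr_pdivlMr in htd; last lra.
nra.
Qed.

Lemma ip_sqD (R : realType) (V : lmodType R) (ip : V -> V -> R) :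
  is_inner_product ip -> forall a w (t : R),
  ip (a + t *: w) (a + t *: w) = ip a a + 2 * t * ip a w + t ^+ 2 * ip w w.
Proof.
move=> Hip a w t; rewrite !(ipDl Hip) !(ipDr Hip) !(ipZl Hip) !(ipZr Hip) (ip_sym Hip w a).
rewrite expr2; lra.
Qed.

Lemma foc (R : realType) (V : lmodType R) (ip : V -> V -> R)
  (f : V -> R) (G : V -> V) (tau : R) (Xn Y : V) :
  is_inner_product ip -> frechet_gradient ip f G -> 0 < tau ->
  (forall xi, trap_functional ip f G tau Xn Y <= trap_functional ip f G tau Xn xi) ->
  Y - Xn = (- (tau / 2)) *: (G Y + G Xn).
Proof.
move=> Hip Hf htau Hmin.
set v := 2^-1 *: G Y + 2^-1 *: G Xn + tau^-1 *: (Y - Xn).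
have Hid : Y - Xn = tau *: v + (- (tau / 2)) *: (G Y + G Xn).
  rewrite /v !scalerDr !scalerA mulfV ?gt_eqF // !scale1r !scaleNr.
  by rewrite -opprD addrAC subrr add0r.
suff hv : v = 0 by rewrite Hid hv scaler0 add0r.
apply: (ip_def Hip); apply/eqP; rewrite eq_le (ip_pos Hip) andbT.
rewrite leNgt; apply/negP => hN2.
set N2 := ip v v in hN2.
set w := - v.
have hww : ip w w = N2 by rewrite /w (ipNl Hip) (ipNr Hip) opprK.
have hw2 : hnorm ip w * hnorm ip w = N2 by rewrite -expr2 (hnorm_sq Hip).
have hwpos : 0 < hnorm ip w.
  rewrite lt_neqAle hnorm_ge0 andbT; apply/eqP => h0; move: hw2; rewrite -h0 mul0r.
  lra.
have [t0 [ht0 Ht]] := frechet_dir Hip Hf Y w hwpos.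
set t := Num.min t0 tau / 2.
have htpos : 0 < t by rewrite /t divr_gt0 // lt_min ht0 htau.
have htt0 : t < t0.
  have : Num.min t0 tau <= t0 by rewrite ge_min lexx.
  rewrite /t; lra.
have httau : t < tau.
  have : Num.min t0 tau <= tau by rewrite ge_min lexx orbT.
  rewrite /t; lra.
have Hb := Ht t htpos htt0.
rewrite (mulrAC (hnorm ip w)) hw2 in Hb.
have Hm := Hmin (Y + t *: w).
rewrite /trap_functional !(hnorm_sq Hip) in Hm.
have E : Y + t *: w - Xn = (Y - Xn) + t *: w by rewrite addrAC.
rewrite E in Hm.
rewrite (ip_sqD Hip) (ipDr Hip Y (t *: w) (G Xn)) (ipZr Hip) in Hm.
have Hvw : ip v w = - N2 by rewrite /w (ipNr Hip).
rewrite /v (ipDl Hip (2^-1 *: G Y + 2^-1 *: G Xn)) (ipDl Hip (2^-1 *: G Y)) !(ipZl Hip) in Hvw.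
move: Hb Hm Hvw.
set A := f (Y + t *: w) - f Y.
set B := ip (G Y) w; set C := ip (G Xn) w; set D := ip (Y - Xn) w.
set Q := ip (Y - Xn) (Y - Xn).
have -> : f (Y + t *: w) = f Y + A by rewrite /A; lra.
move=> Hb Hm Hvw.
have hAB : A <= t * B + t * N2 by move: Hb => /ler_normlP [_]; lra.
have hit : tau * tau^-1 = 1 by rewrite mulfV ?gt_eqF.
have hitp : 0 < tau^-1 by rewrite invr_gt0.
rewrite invfM in Hm.
set it := tau^-1 in hit hitp Hm Hvw.
have h2 : (2:R)^-1 = 1/2 by rewrite div1r.
rewrite h2 in Hm Hvw.
have Hd : it * D = - N2 - B / 2 - C / 2 by lra.
have S1 : 0 <= A / 2 + t * C / 2 + it * t * D + it * t ^+ 2 * N2 / 2.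
  move: Hm; rewrite hww; lra.
have S2 : it * t * D = t * (- N2 - B / 2 - C / 2) by rewrite -Hd; ring.
have S3 : it * t < 1 by nra.
have S4 : 0 <= t * N2 * (it * t - 1).
  rewrite S2 in S1; move: S1; rewrite expr2; nra.
have : t * N2 * (it * t - 1) < 0.
  have hp : 0 < t * N2 by rewrite mulr_gt0.
  nra.
lra.
Qed.

Lemma grad_ineq (R : realType) (V : lmodType R) (ip : V -> V -> R)
  (f : V -> R) (G : V -> V) (lam : R) :
  is_inner_product ip -> frechet_gradient ip f G -> lambda_convex ip lam f ->
  0 <= lam -> forall x y,
  f x + ip (G x) (y - x) + lam / 2 * ip (y - x) (y - x) <= f y.
Proof.
move=> Hip Hf Hc hlam x y.
set h := y - x; set M := ip h h; set B := ip (G x) h.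
have hM : 0 <= M by exact: ip_pos.
rewrite leNgt; apply/negP => hlt.
set c := f x + B + lam / 2 * M - f y.
have hc : 0 < c by rewrite /c; lra.
have hN := @hnorm_ge0 R V ip h.
set e := c / (2 * (hnorm ip h + 1)).
have he : 0 < e by rewrite /e divr_gt0 //; lra.
have heh : e * hnorm ip h < c / 2.
  rewrite /e mulrAC ltr_pdivrMr; last lra.
  nra.
have [t0 [ht0 Ht]] := frechet_dir Hip Hf x h he.
set k := c / (2 * (lam * M + 1)).
have hk : 0 < k by rewrite /k divr_gt0 //; nra.
set t := Num.min (Num.min t0 1) k / 2.
have hmin1 : Num.min (Num.min t0 1) k <= Num.min t0 1 by rewrite ge_min lexx.
have hmin2 : Num.min (Num.min t0 1) k <= k by rewrite ge_min lexx orbT.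
have hmin3 : Num.min t0 1 <= t0 by rewrite ge_min lexx.
have hmin4 : Num.min t0 1 <= 1 by rewrite ge_min lexx orbT.
have htpos : 0 < t by rewrite /t divr_gt0 // !lt_min ht0 ltr01 hk.
have htt0 : t < t0 by rewrite /t; lra.
have ht1 : t <= 1 by rewrite /t; lra.
have htk : t < k by rewrite /t; lra.
have htk' : t * (2 * (lam * M + 1)) < c.
  by move: htk; rewrite /k ltr_pdivlMr //; nra.
have Hb := Ht t htpos htt0.
have Hcv := Hc x y t.
have E1 : (1 - t) *: x + t *: y = x + t *: h.
  by rewrite /h scalerBl scale1r scalerBr addrAC -addrA [t *: y - t *: x]addrC.
have E2 : hnorm ip (x - y) ^+ 2 = M.
  by rewrite (hnorm_sq Hip) /M /h -opprB (ipNl Hip) (ipNr Hip) opprK.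
rewrite E1 E2 in Hcv.
have := Hcv; rewrite ht1 andbT ltW //; move=> {}Hcv.
move: Hb => /ler_normlP [Hb _].
have S : t * c <= e * t * hnorm ip h + lam / 2 * t ^+ 2 * M.
  rewrite /c /B; move: Hcv Hb; rewrite expr2; nra.
have S' : c <= e * hnorm ip h + lam / 2 * t * M.
  rewrite -(ler_pM2l htpos); move: S; rewrite expr2; nra.
nra.
Qed.

Theorem mainTheorem17 (R : realType) (V : lmodType R) (ip : V -> V -> R)
  (phi : V -> R) (G : V -> V) (lam L tau : R) (X : nat -> V) :
  hilbert ip ->
  frechet_gradient ip phi G ->
  lambda_convex ip lam phi ->
  bounded_below phi ->
  0 < tau -> 0 < lam / 2 + tau^-1 ->
  trapezoidal_scheme ip phi G tau X ->
  0 <= lam ->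
  0 < L -> hlipschitz ip L G -> tau <= L^-1 ->
  forall n : nat,
    phi (X n.+1) + lam / 2 * hnorm ip (X n - X n.+1) ^+ 2
      + tau * (1 - L * tau / 2) * hnorm ip (G (X n.+1)) ^+ 2 <= phi (X n)
    /\ 0 <= lam_tauL lam tau L
    /\ expR (2 * lam_tauL lam tau L * tau) * hnorm ip (G (X n.+1)) ^+ 2
         <= hnorm ip (G (X n)) ^+ 2.
Proof.
move=> [Hip _] Hf Hc _ htau _ Hs hlam hL HLip htL n.
have ha1 : L * tau <= 1 by rewrite -(@mulfV _ L) ?gt_eqF // ler_pM2l.
have ha0 : 0 <= L * tau by rewrite mulr_ge0 // ltW.
set Y := X n.+1; set Z := X n.
have Hfoc : Y - Z = (- (tau / 2)) *: (G Y + G Z) := foc Hip Hf htau (Hs n).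
have HXY : Z - Y = (tau / 2) *: (G Y + G Z) by rewrite -opprB Hfoc scaleNr opprK.
have B1 := grad_ineq Hip Hf Hc hlam Y Z.
have B2 := grad_ineq Hip Hf Hc hlam Z Y.
have Lp := HLip Z Y.
set g := ip (G Y) (G Y); set cc := ip (G Y) (G Z); set ee := ip (G Z) (G Z).
have Hsym : ip (G Z) (G Y) = cc by rewrite (ip_sym Hip).
have EP : ip (Z - Y) (Z - Y) = (tau / 2) ^+ 2 * (g + 2 * cc + ee).
  rewrite HXY (ipZl Hip) (ipZr Hip) !(ipDl Hip) !(ipDr Hip) Hsym expr2 /g /cc /ee; ring.
have EP' : ip (Y - Z) (Y - Z) = (tau / 2) ^+ 2 * (g + 2 * cc + ee).
  by rewrite -opprB (ipNl Hip) (ipNr Hip) opprK.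
have E1 : ip (G Y) (Z - Y) = tau / 2 * (g + cc).
  by rewrite HXY (ipZr Hip) (ipDr Hip).
have E2 : ip (G Z) (Y - Z) = - (tau / 2) * (cc + ee).
  by rewrite Hfoc (ipZr Hip) (ipDr Hip) Hsym.
have ED : ip (G Z - G Y) (G Z - G Y) = ee - 2 * cc + g.
  rewrite (ipBl Hip) !(ipBr Hip) Hsym; rewrite -/g -/ee /g /cc /ee; ring.
have Lp2 : ee - 2 * cc + g <= L ^+ 2 * ((tau / 2) ^+ 2 * (g + 2 * cc + ee)).
  rewrite -ED -EP -!(hnorm_sq Hip) -exprMn.
  have h0 := @hnorm_ge0 R V ip (G Z - G Y); move: Lp; rewrite !expr2; nra.
rewrite EP' in B2; rewrite E1 EP in B1; rewrite E2 in B2.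
have hg : 0 <= g by exact: ip_pos.
have hD : 0 <= ee - 2 * cc + g by rewrite -ED; exact: ip_pos.
have hP : 0 <= g + 2 * cc + ee.
  have := ip_pos Hip (G Y + G Z); rewrite !(ipDl Hip) !(ipDr Hip) Hsym /g /cc /ee; lra.
have hz : 1 <= 1 + lam * tau * (2 - L * tau).
  have : 0 <= lam * tau * (2 - L * tau) by apply: mulr_ge0; [apply: mulr_ge0; lra | lra].
  lra.
have Elam : expR (2 * lam_tauL lam tau L * tau) = 1 + lam * tau * (2 - L * tau).
  rewrite /lam_tauL.
  have -> : 2 * (ln (1 + lam * tau * (2 - L * tau)) / (2 * tau)) * tau
     = ln (1 + lam * tau * (2 - L * tau)).
    by field; rewrite gt_eqF.
  by rewrite lnK // posrE; lra.
rewrite !(hnorm_sq Hip) EP Elam -/g -/ee.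
have hlt : 0 <= lam_tauL lam tau L.
  by rewrite /lam_tauL divr_ge0 ?ln_ge0 // mulr_ge0 // ltW.
move: hlt; generalize (lam_tauL lam tau L) => lt hlt.
clearbody g cc ee.
have Lp2' : ee - 2 * cc + g <= (L * tau) ^+ 2 / 4 * (g + 2 * cc + ee).
  by move: Lp2; rewrite !expr2; lra.
clear Lp2 Elam.
move: (L * tau) ha1 ha0 Lp2' hz => a ha1 ha0 Lp2 hz.
move: (phi Y) (phi Z) B1 B2 => pY pZ B1 B2.
have K1 : 0 <= 2 * (cc - g) + (ee - 2 * cc + g).
  have : 0 <= lam * ((tau / 2) ^+ 2 * (g + 2 * cc + ee)).
    by apply: mulr_ge0 => //; apply: mulr_ge0 => //; apply: sqr_ge0.
  move=> h; move: B1 B2 h; rewrite !expr2; nra.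
have Lp3 : 4 * (ee - 2 * cc + g) <= a ^+ 2 * (4 * g + 4 * (cc - g) + (ee - 2 * cc + g)).
  by move: Lp2; rewrite !expr2; lra.
have K3 : 0 <= 2 * a ^+ 2 * g + (cc - g) * (4 + a ^+ 2).
  have h1 : 0 <= 4 - a ^+ 2 by rewrite expr2; nra.
  have h2 : 0 <= (4 - a ^+ 2) * (2 * (cc - g) + (ee - 2 * cc + g)) by rewrite mulr_ge0.
  move: Lp3 h2; rewrite !expr2; nra.
have K4 : - (a * g / 2) <= cc - g.
  have h3 : 0 <= g * a * (a - 2) ^+ 2 by apply: mulr_ge0; [apply: mulr_ge0 => // | exact: sqr_ge0].
  have h4 : 0 < 4 + a ^+ 2 by rewrite expr2; nra.
  rewrite -(ler_pM2r h4); move: K3 h3; rewrite !expr2; nra.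
split; last split => //.
- have : 0 <= tau * a * g by rewrite !mulr_ge0 // ltW.
  move: B1 K4; rewrite !expr2; nra.
- have Hm : 0 <= lam * tau * (2 * (cc - g) + (ee - 2 * cc + g) / 2 + a * g).
    by apply: mulr_ge0; [apply: mulr_ge0; lra | lra].
  have Hmono : 2 * lam * ((tau / 2) ^+ 2 * (g + 2 * cc + ee)) <= tau / 2 * (ee - g) * 2.
    by move: B1 B2; lra.
  have Hmono' : lam * tau / 2 * (g + 2 * cc + ee) <= ee - g.
    rewrite -(ler_pM2l htau); move: Hmono; rewrite !expr2.
    have -> : tau * (lam * tau / 2 * (g + 2 * cc + ee)) = 2 * lam * (tau / 2 * (tau / 2) * (g + 2 * cc + ee)) by field.
    lra.
  move: Hm Hmono'; nra.
Qed.
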